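(* In the setting below, for all $a,b,c\in A$, $$\sum_{x\in M}\ell_a(x)\ell_b(x)\ell_c(x)=\begin{cases}-1 & a=b=c\in B,\\ 0&\text{otherwise.}\end{cases}$$
   Context: Let $q=2^l$ ($l\ge2$) and $\mathbb F_q$ the field with $q$ elements. Fix integers $k,m,s$ with $q/3\ge k\ge m\ge s>0$ and $2k\le q-m$. Fix $A\subseteq\mathbb F_q$ with $|A|=k$, $B\subseteq A$ with $|B|=s$, and let $M=\mathbb F_q\setminus B$. For $a\in A$, the Lagrange interpolation polynomial is $\ell_a(x)=\prod_{a'\in A\setminus\{a\}}\frac{x-a'}{a-a'}$. *)

(* Defs.v *)
From mathcomp Require Import all_boot all_order all_algebra all_field.
Set Implicit Arguments. Unset Strict Implicit. Unset Printing Implicit Defensive.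
Import GRing.Theory.
Local Open Scope ring_scope.

Definition lagrange_basis (F : finFieldType) (A : {set F}) (a x : F) : F :=
  \prod_(a' in A :\ a) ((x - a') / (a - a')).

(* Main.v *)
Require Import Defs.
From mathcomp Require Import all_boot all_order all_algebra all_field.
From mathcomp Require Import zify.
Import GRing.Theory.
Local Open Scope ring_scope.

Lemma sum_pow (F : finFieldType) i : (0 < i < #|F|.-1)%N ->
  \sum_(x : F) x ^+ i = 0.
Proof.
case/andP => i0 iq.
have [y y0 yi]: exists2 y : F, y != 0 & y ^+ i != 1.
  case: (boolP [exists y : F, (y != 0) && (y ^+ i != 1)]).
    by case/existsP => y /andP[]; exists y.
  rewrite negb_exists => /forallP H.
  have hall : all (i.-unity_root) (enum [set~ (0:F)]).
    apply/allP => z; rewrite mem_enum in_setC1 => z0.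
    by rewrite unity_rootE; move: (H z); rewrite z0 /= negbK.
  have := @max_unity_roots F i (enum [set~ (0:F)]) i0 hall (enum_uniq _).
  by rewrite -cardE cardsC1 leqNgt iq.
set S := \sum_(x : F) x ^+ i.
have : S = y ^+ i * S.
  rewrite {1}/S (reindex_inj (mulfI y0)) /= /S mulr_sumr.
  by apply: eq_bigr => x _; rewrite exprMn.
move/eqP; rewrite -subr_eq0 -{1}[S]mul1r -mulrBl mulf_eq0 subr_eq0 eq_sym.
by rewrite (negbTE yi) /= => /eqP.
Qed.

Lemma sum_horner (F : finFieldType) (p : {poly F}) :
  #|F|%:R = 0 :> F -> (size p < #|F|)%N -> \sum_(x : F) p.[x] = 0.
Proof.
move=> h0 hs.
under eq_bigr => x _ do rewrite horner_coef.
rewrite exchange_big /=; apply: big1 => i _.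
rewrite -mulr_sumr.
case: (posnP i) => [->|ip].
  by under eq_bigr => x _ do rewrite expr0; rewrite sumr_const h0 mulr0.
rewrite sum_pow ?mulr0 // ip /=.
by rewrite -subn1 ltn_subRL add1n (leq_ltn_trans (ltn_ord i) hs).
Qed.

Definition lp {F : finFieldType} (A : {set F}) (a : F) : {poly F} :=
  \prod_(a' in A :\ a) (((a - a')^-1)%:P * ('X - a'%:P)).

Lemma lpE (F : finFieldType) (A : {set F}) a x :
  (lp A a).[x] = lagrange_basis A a x.
Proof.
rewrite /lp horner_prod; apply: eq_bigr => a' _.
by rewrite hornerM hornerC hornerXsubC mulrC.
Qed.

Lemma size_lp (F : finFieldType) (A : {set F}) a :
  (size (lp A a) <= #|A :\ a|.+1)%N.
Proof.
rewrite /lp size_prod.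
  rewrite (eq_bigr (fun _ => 2%N)).
    rewrite sum_nat_const; have -> : #|in_mem^~ (mem (A :\ a))| = #|A :\ a| by apply: eq_card.
    lia.
  move=> a' /setD1P [a'a _].
  by rewrite size_Cmul ?size_XsubC // invr_eq0 subr_eq0 eq_sym.
move=> a' /setD1P [a'a _].
by rewrite mulf_neq0 ?polyXsubC_eq0 // polyC_eq0 invr_eq0 subr_eq0 eq_sym.
Qed.

Lemma lb_A (F : finFieldType) (A : {set F}) a x : x \in A ->
  lagrange_basis A a x = (x == a)%:R.
Proof.
move=> xA; case: eqVneq => [->|xa].
  apply: big1 => a' /setD1P [a'a _].
  by rewrite divff // subr_eq0 eq_sym.
rewrite /lagrange_basis (bigD1 x) /=; last by rewrite in_setD1 xa.
by rewrite subrr !mul0r.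
Qed.

Theorem lemma5p8 (F : finFieldType) (l k m s : nat)
  (hl : (2 <= l)%N) (hq : #|F| = (2 ^ l)%N)
  (hkq : (3 * k <= #|F|)%N) (hmk : (m <= k)%N) (hsm : (s <= m)%N) (hs : (0 < s)%N)
  (h2k : (2 * k <= #|F| - m)%N)
  (A B : {set F}) (hA : #|A| = k) (hBA : B \subset A) (hB : #|B| = s)
  (a b c : F) (ha : a \in A) (hb : b \in A) (hc : c \in A) :
  \sum_(x in ~: B) lagrange_basis A a x * lagrange_basis A b x * lagrange_basis A c x =
  (if [&& a == b, b == c & a \in B] then -1 else 0).
Proof.
have h0 : #|F|%:R = 0 :> F.
  have ch : (2 \in [pchar F])%N := card_finPcharP hq isT.
  by rewrite hq natrX (pcharf0 ch) expr0n; case: (l) hl.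
have hsz : forall d, d \in A -> (size (lp A d) <= k)%N.
  move=> d hd; have := @size_lp F A d; have := cardsD1 d A; rewrite hd hA; lia.
have Hall : \sum_(x : F) lagrange_basis A a x * lagrange_basis A b x
     * lagrange_basis A c x = 0.
  rewrite -[RHS](@sum_horner F (lp A a * lp A b * lp A c) h0).
    by apply: eq_bigr => x _; rewrite !hornerM !lpE.
  have := size_polyMleq (lp A a * lp A b) (lp A c).
  have := size_polyMleq (lp A a) (lp A b).
  have := hsz a ha; have := hsz b hb; have := hsz c hc.
  rewrite -!subn1; lia.
rewrite (bigID (mem B)) /= in Hall.
rewrite [LHS](eq_bigl (fun x => ~~ (x \in B))); last by move=> x; rewrite in_setC.
move/eqP: Hall; rewrite addrC addr_eq0 => /eqP ->.
case: (boolP [&& a == b, b == c & a \in B]) => H.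
  case/and3P: H => /eqP ab /eqP bc aB; rewrite -bc -ab.
  rewrite (bigD1 a) //= big1 ?addr0.
    by rewrite lb_A // eqxx /= !mulr1.
  move=> x /andP[xB xa]; rewrite (@lb_A F A a x (subsetP hBA x xB)) (negbTE xa).
  by rewrite !mul0r.
rewrite big1 ?oppr0 // => x xB; have xA := subsetP hBA x xB; rewrite !lb_A //.
case: eqVneq => xa; last by rewrite !mul0r.
case: eqVneq => xb; last by rewrite mulr0 mul0r.
case: eqVneq => xc; last by rewrite mulr0.
by move: H; rewrite -xa -xb -xc xB !eqxx.
Qed.
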